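(* Let $\Omega\subset\mathbb{R}^n$ be a bounded convex open set, and suppose there exists $R_0>0$ such that for every $z\in\partial\Omega$ there is a ball of radius at most $R_0$ containing $\Omega$ whose boundary contains $z$. Let $\rho\in(0,1)$ be a constant as described in the context, and let $r_0>0$. Let $x_0\in\Omega$ with $d_0:=d(x_0,\partial\Omega)$ satisfying $$d_0\le\min\Big(\frac{\rho^2}{16(1+4R_0)},\frac{r_0}{2},\frac14\Big),$$ let $v_0$ be a unit vector such that $x_\partial:=x_0+d_0v_0\in\partial\Omega$, set $\theta:=\sqrt{d_0/(6R_0)}$, and let $$E_\theta:=\{x\in\Omega\mid\langle x-x_0,-v_0\rangle\le\theta|x-x_0|\}.$$ Then $$E_\theta\subset B^n_{\sqrt{(1+4R_0)d_0}}(x_\partial)\subset B^n_{\rho/4}(x_\partial).$$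
   Context: $B^n_r(z)$ is the open ball in $\mathbb{R}^n$. The constant $\rho\in(0,1)$ (together with some $L>0$, $C_1>1$) is such that: for each $z\in\partial\Omega$, after a rotation and translation of coordinates, there is an $L$-Lipschitz function $\phi:B^{n-1}_\rho(0)\to(-C_1\rho,C_1\rho)$ with $\mathcal{C}_\rho\cap\Omega=\{(y',y_n)\in\mathcal{C}_\rho\mid y_n>\phi(y')\}$ and $z\in\mathcal{C}_{\rho/2}$, where $\mathcal{C}_r=B^{n-1}_r(0)\times(-2C_1r,2C_1r)$. *)

(* Defs.v *)
From HB Require Import structures.
From mathcomp Require Import all_boot all_order all_algebra.
From mathcomp Require Import all_classical all_reals.
Set Implicit Arguments. Unset Strict Implicit. Unset Printing Implicit Defensive.
Import Order.TTheory GRing.Theory Num.Theory.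
Local Open Scope ring_scope.
Local Open Scope classical_set_scope.

(* Euclidean space R^k is modelled by row vectors 'rV[R]_k, with the
   Euclidean inner product and norm defined explicitly (the library's
   default norm on matrices is the sup norm). *)
Section Euclid.
Variable R : realType.

Definition edot k (x y : 'rV[R]_k) : R := \sum_(i < k) x 0 i * y 0 i.
Definition enorm k (x : 'rV[R]_k) : R := Num.sqrt (edot x x).

Definition eball k (c : 'rV[R]_k) (r : R) : set 'rV[R]_k :=
  [set x | enorm (x - c) < r].

Definition eopen k (A : set 'rV[R]_k) : Prop :=
  forall x, A x -> exists2 e : R, 0 < e & eball x e `<=` A.
Definition eclosure k (A : set 'rV[R]_k) : set 'rV[R]_k :=
  [set x | forall e : R, 0 < e -> exists2 y, A y & enorm (y - x) < e].
Definition einterior k (A : set 'rV[R]_k) : set 'rV[R]_k :=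
  [set x | exists2 e : R, 0 < e & eball x e `<=` A].
Definition eboundary k (A : set 'rV[R]_k) : set 'rV[R]_k :=
  eclosure A `\` einterior A.

Definition ebounded k (A : set 'rV[R]_k) : Prop :=
  exists M : R, forall x, A x -> enorm x <= M.
Definition econvex k (A : set 'rV[R]_k) : Prop :=
  forall x y (t : R), A x -> A y -> 0 <= t <= 1 -> A ((1 - t) *: x + t *: y).

Definition edist k (x : 'rV[R]_k) (A : set 'rV[R]_k) : R :=
  inf [set enorm (x - z) | z in A].

Definition yprime n (y : 'rV[R]_n.+1) : 'rV[R]_n :=
  \row_(i < n) y 0 (widen_ord (leqnSn n) i).
Definition ylast n (y : 'rV[R]_n.+1) : R := y 0 ord_max.

Definition cyl n (C1 r : R) : set 'rV[R]_n.+1 :=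
  [set y | enorm (yprime y) < r /\ - (2 * C1 * r) < ylast y < 2 * C1 * r].

(* The Lipschitz-boundary condition of the context, with constants rho, L, C1:
   for every boundary point z, after a rotation Q and translation b of
   coordinates (y = (x - b) Q), there is an L-Lipschitz
   phi : B^(n)_rho(0) -> (-C1 rho, C1 rho) with
   C_rho /\ Omega = {y in C_rho | y_n > phi y'} and z in C_(rho/2). *)
Definition lip_boundary n (Omega : set 'rV[R]_n.+1) (rho L C1 : R) : Prop :=
  forall z, eboundary Omega z ->
  exists (Q : 'M[R]_n.+1) (b : 'rV[R]_n.+1) (phi : 'rV[R]_n -> R),
    [/\ Q *m Q^T = 1%:M /\ \det Q = 1,
        (forall y', eball 0 rho y' -> - (C1 * rho) < phi y' < C1 * rho),
        (forall y1 y2, eball 0 rho y1 -> eball 0 rho y2 ->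
            `|phi y1 - phi y2| <= L * enorm (y1 - y2)),
        (forall x, cyl C1 rho ((x - b) *m Q) ->
            (Omega x <-> phi (yprime ((x - b) *m Q)) < ylast ((x - b) *m Q)))
      & cyl C1 (rho / 2) ((z - b) *m Q)].

End Euclid.

(* Main.v *)
Require Import Defs.
From HB Require Import structures.
From mathcomp Require Import all_boot all_order all_algebra.
From mathcomp Require Import all_classical all_reals.
From mathcomp Require Import ring lra.
Import Order.TTheory GRing.Theory Num.Theory.
Local Open Scope ring_scope.
Local Open Scope classical_set_scope.

Lemma quad_lim (R : realType) (B C d : R) : 0 < d ->
  (forall t, 0 < t -> t < d -> t ^+ 2 + B * t + C < 0) -> d ^+ 2 + B * d + C <= 0.
Proof.
move=> d0 H; rewrite leNgt; apply/negP => G0.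
set G := d ^+ 2 + B * d + C in G0.
set K := `|2 * d + B| + 1.
have K0 : 0 < K by rewrite /K ltr_pwDr.
have HK : 2 * d + B <= K by rewrite /K (le_trans (ler_norm _)) // lerDl.
set s := Num.min (d / 2) (G / (2 * K)).
have s0 : 0 < s by rewrite /s lt_min !divr_gt0 ?mulr_gt0.
have s1 : s <= d / 2 by rewrite /s ge_min lexx.
have s2 : s <= G / (2 * K) by rewrite /s ge_min lexx orbT.
have sK : s * K <= G / 2.
  have := ler_wpM2r (ltW K0) s2.
  have -> : G / (2 * K) * K = G / 2 by field; rewrite gt_eqF.
  done.
have sB : s * (2 * d + B) <= s * K by rewrite ler_wpM2l // ltW.
have := H (d - s) ltac:(lra) ltac:(lra).
have -> : (d - s) ^+ 2 + B * (d - s) + C = G - s * (2 * d + B) + s ^+ 2 by rewrite /G; ring.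
have : 0 <= s ^+ 2 by rewrite sqr_ge0.
lra.
Qed.

Section H.
Variables (R : realType) (k : nat).
Implicit Types (x y z : 'rV[R]_k) (a b : R).

Lemma dotC x y : edot x y = edot y x.
Proof. by apply: eq_bigr => i _; rewrite mulrC. Qed.
Lemma dotDl x y z : edot (x + y) z = edot x z + edot y z.
Proof. by rewrite /edot -big_split; apply: eq_bigr => i _; rewrite mxE mulrDl. Qed.
Lemma dotZl a x y : edot (a *: x) y = a * edot x y.
Proof. by rewrite /edot mulr_sumr; apply: eq_bigr => i _; rewrite mxE mulrA. Qed.
Lemma dotNl x y : edot (- x) y = - edot x y.
Proof. by rewrite /edot -sumrN; apply: eq_bigr => i _; rewrite mxE mulNr. Qed.
Lemma dotBl x y z : edot (x - y) z = edot x z - edot y z.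
Proof. by rewrite dotDl dotNl. Qed.
Lemma dotDr x y z : edot z (x + y) = edot z x + edot z y.
Proof. by rewrite dotC dotDl !(dotC z). Qed.
Lemma dotZr a x y : edot y (a *: x) = a * edot y x.
Proof. by rewrite dotC dotZl dotC. Qed.
Lemma dotNr x y : edot y (- x) = - edot y x.
Proof. by rewrite dotC dotNl dotC. Qed.
Lemma dotBr x y z : edot z (x - y) = edot z x - edot z y.
Proof. by rewrite dotDr dotNr. Qed.
Lemma dot_ge0 x : 0 <= edot x x.
Proof. by apply: sumr_ge0 => i _; rewrite -expr2 sqr_ge0. Qed.
Lemma dot_eq0 x : edot x x = 0 -> x = 0.
Proof.
move=> /eqP; rewrite psumr_eq0; last by move=> i _; rewrite -expr2 sqr_ge0.
move=> /allP H; apply/matrixP => i j; rewrite ord1 mxE.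
by have /implyP := H j (mem_index_enum j); rewrite -expr2 sqrf_eq0 => /(_ isT)/eqP.
Qed.
Lemma enorm_ge0 x : 0 <= enorm x.
Proof. exact: sqrtr_ge0. Qed.
Lemma enorm_sq x : enorm x ^+ 2 = edot x x.
Proof. by rewrite sqr_sqrtr // dot_ge0. Qed.
Lemma enormZ a x : enorm (a *: x) = `|a| * enorm x.
Proof. by rewrite /enorm dotZl dotZr mulrA -expr2 sqrtrM ?sqr_ge0 // sqrtr_sqr. Qed.
Lemma enormN x : enorm (- x) = enorm x.
Proof. by rewrite /enorm dotNl dotNr opprK. Qed.
Lemma enorm_lt x a : 0 <= a -> (enorm x < a) = (edot x x < a ^+ 2).
Proof.
move=> a0; rewrite -enorm_sq; apply/idP/idP => H.
  by rewrite ltr_pXn2r // ?nnegrE ?enorm_ge0.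
by rewrite -(ltr_pXn2r (_ : 0 < 2)%N) // ?nnegrE ?enorm_ge0.
Qed.
Lemma enorm0 : enorm (0 : 'rV[R]_k) = 0.
Proof. by rewrite -(scale0r (0 : 'rV[R]_k)) enormZ normr0 mul0r. Qed.

Lemma inner_ball (Omega : set 'rV[R]_k) x0 y : eopen Omega -> Omega x0 ->
  enorm (y - x0) < edist x0 (eboundary Omega) -> Omega y.
Proof.
move=> oO Ox0 Hy; have [//|Ny] := pselect (Omega y).
set u := y - x0; set N := enorm u.
have N0 : 0 <= N by exact: enorm_ge0.
set P := fun t : R => x0 + t *: u.
set S := [set t : R | (0 <= t <= 1) /\ Omega (P t)].
have S0 : S 0 by split; [rewrite lexx ler01 | rewrite /P scale0r addr0].
have hS : has_sup S by split; [exists 0 | exists 1 => t [/andP[_ ?] _]].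
set T := sup S.
have ub : forall t, S t -> t <= T by move=> t St; exact: sup_upper_bound.
have T0 : 0 <= T := ub 0 S0.
have T1 : T <= 1 by apply: ge_sup; [exists 0 | move=> t [/andP[_ ?] _]].
set z := P T.
have Pdiff : forall a b, P a - P b = (a - b) *: u.
  move=> a b; rewrite /P opprD addrACA subrr add0r -scalerN.
  by rewrite scalerN -scaleNr -scalerDl.
have Nz : ~ Omega z.
  move=> Oz; have [e e0 He] := oO z Oz.
  have [T1'|Tlt] := eqVneq T 1.
    by apply: Ny; have eqz : z = x0 + T *: u by []; rewrite -[y](subrK x0) addrC -/u -(scale1r u) -T1' -eqz.
  have Tl : T < 1 by rewrite lt_neqAle Tlt T1.
  set dl := Num.min (1 - T) (e / (2 * (N + 1))).
  have dl0 : 0 < dl by rewrite /dl lt_min subr_gt0 Tl divr_gt0 // mulr_gt0 // ltr_wpDl.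
  have dl1 : dl <= 1 - T by rewrite /dl ge_min lexx.
  have dl2 : dl <= e / (2 * (N + 1)) by rewrite /dl ge_min lexx orbT.
  have dlN : dl * (N + 1) <= e / 2.
    have := ler_wpM2r (_ : 0 <= N + 1) dl2.
    have -> : e / (2 * (N + 1)) * (N + 1) = e / 2.
      by field; rewrite gt_eqF // ltr_wpDl.
    by apply; rewrite addr_ge0.
  have St : S (T + dl).
    split; first by apply/andP; split; lra.
    apply: He; rewrite /eball /= -/(P T) Pdiff enormZ.
    have -> : T + dl - T = dl by ring.
    rewrite ger0_norm ?ltW //; rewrite -/N; nra.
  have := ub _ St; lra.
have Cz : eclosure Omega z.
  move=> e e0; set ep := e / (N + 1).
  have ep0 : 0 < ep by rewrite divr_gt0 // ltr_wpDl.
  have epN : ep * (N + 1) = e by rewrite /ep; field; rewrite gt_eqF // ltr_wpDl.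
  have [t St Ht] := sup_adherent ep0 hS.
  exists (P t); first exact: St.2.
  rewrite Pdiff enormZ -/N ler0_norm; last by have := ub t St; lra.
  have : (- (t - T)) * N <= ep * N.
    apply: ler_wpM2r => //; rewrite -/T in Ht; lra.
  nra.
have Iz : ~ einterior Omega z.
  by move=> [e e0 He]; apply: Nz; apply: He; rewrite /eball /= subrr enorm0.
have Bz : eboundary Omega z by split.
have : edist x0 (eboundary Omega) <= enorm (x0 - z).
  apply: ge_inf; last by exists z.
  by exists 0 => _ [w _ <-]; exact: enorm_ge0.
have -> : x0 - z = P 0 - P T by rewrite /P scale0r addr0.
rewrite Pdiff enormZ sub0r normrN ger0_norm //.
rewrite -/N in Hy; rewrite -/N => H; nra.
Qed.
Lemma dot_lin2 a b x y : edot (a *: x + b *: y) (a *: x + b *: y) =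
  a ^+ 2 * edot x x + 2 * a * b * edot x y + b ^+ 2 * edot y y.
Proof. rewrite !dotDl !dotDr !dotZl !dotZr (dotC y x); ring. Qed.
End H.

Theorem lemma5p3 (R : realType) (n : nat) (Omega : set 'rV[R]_n.+1)
  (R0 rho L C1 r0 : R) (x0 v0 : 'rV[R]_n.+1) :
  eopen Omega -> ebounded Omega -> econvex Omega ->
  0 < R0 ->
  (forall z, eboundary Omega z ->
     exists (c : 'rV[R]_n.+1) (r : R),
       [/\ 0 < r, r <= R0, Omega `<=` eball c r & enorm (z - c) = r]) ->
  0 < rho < 1 -> 0 < L -> 1 < C1 -> lip_boundary Omega rho L C1 ->
  0 < r0 ->
  Omega x0 ->
  edist x0 (eboundary Omega) <=
    Num.min (rho ^+ 2 / (16 * (1 + 4 * R0))) (Num.min (r0 / 2) (1 / 4)) ->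
  enorm v0 = 1 ->
  eboundary Omega (x0 + edist x0 (eboundary Omega) *: v0) ->
  let d0 := edist x0 (eboundary Omega) in
  let xb := x0 + d0 *: v0 in
  let theta := Num.sqrt (d0 / (6 * R0)) in
  let Etheta := [set x | Omega x /\ edot (x - x0) (- v0) <= theta * enorm (x - x0)] in
  Etheta `<=` eball xb (Num.sqrt ((1 + 4 * R0) * d0)) /\
  eball xb (Num.sqrt ((1 + 4 * R0) * d0)) `<=` eball xb (rho / 4).
Proof.
move=> oO _ _ R00 Hball /andP[rho0 rho1] _ _ _ _ Ox0 Hd0 v01 Bxb d0 xb theta Etheta.
rewrite -/d0 in Hd0 Bxb; rewrite -/d0 -/xb in Bxb.
have vv : edot v0 v0 = 1 by rewrite -enorm_sq v01 expr1n.
have BnO : forall z, eboundary Omega z -> ~ Omega z.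
  by move=> z [_ NI] Oz; apply: NI; exact: oO z Oz.
have d0ge : 0 <= d0.
  apply: lb_le_inf; first by exists (enorm (x0 - xb)), xb.
  by move=> _ [w _ <-]; exact: enorm_ge0.
have d0pos : 0 < d0.
  rewrite lt_neqAle d0ge andbT; apply/eqP => d00.
  by apply: (BnO _ Bxb); rewrite /xb -d00 scale0r addr0.
have Hmin : d0 <= rho ^+ 2 / (16 * (1 + 4 * R0)) by move: Hd0; rewrite le_min => /andP[].
have inner : forall y, enorm (y - x0) < d0 -> Omega y.
  by move=> y; apply: inner_ball.
have [c [r [r0' rR0 Osub hr]]] := Hball xb Bxb.
set m := xb - c.
have mm : edot m m = r ^+ 2 by rewrite -enorm_sq hr.
have Sub : forall y, Omega y -> edot (y - c) (y - c) < r ^+ 2.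
  by move=> y /Osub; rewrite /eball /= enorm_lt // ltW.
set p := edot m v0.
have pr : r <= p.
  have Q := @quad_lim R (2 * r - 2 * d0 * p / r) (d0 ^+ 2 - 2 * d0 * p) d0 d0pos.
  have rn0 : r != 0 by rewrite gt_eqF.
  have /Q H : forall t, 0 < t -> t < d0 ->
      t ^+ 2 + (2 * r - 2 * d0 * p / r) * t + (d0 ^+ 2 - 2 * d0 * p) < 0.
    move=> t t0 td; set y := x0 + (t / r) *: m.
    have Oy : Omega y.
      apply: inner; have -> : y - x0 = (t / r) *: m by rewrite /y addrC addKr.
      rewrite enormZ hr ger0_norm ?divr_ge0 ?ltW //.
      have -> : t / r * r = t by field.
      done.
    have := Sub y Oy.
    have -> : y - c = (1 + t / r) *: m + (- d0) *: v0.
      by apply/matrixP => i j; rewrite /y /m /xb !mxE; ring.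
    rewrite dot_lin2 mm vv -/p => H.
    have E : (1 + t / r) ^+ 2 * r ^+ 2 + 2 * (1 + t / r) * (- d0) * p + (- d0) ^+ 2 * 1 - r ^+ 2
      = t ^+ 2 + (2 * r - 2 * d0 * p / r) * t + (d0 ^+ 2 - 2 * d0 * p) by field.
    lra.
  have E2 : r * (d0 ^+ 2 + (2 * r - 2 * d0 * p / r) * d0 + (d0 ^+ 2 - 2 * d0 * p))
    = (2 * d0 * (d0 + r)) * (r - p) by field.
  move: H; rewrite -(pmulr_rle0 _ r0') E2 pmulr_rle0; first by lra.
  by rewrite mulr_gt0 ?mulr_gt0 ?addr_gt0.
have hm : m = r *: v0.
  apply: subr0_eq; apply: dot_eq0; apply/eqP; rewrite eq_le dot_ge0 andbT.
  have -> : m - r *: v0 = 1 *: m + (- r) *: v0 by rewrite scale1r scaleNr.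
  rewrite dot_lin2 mm vv -/p; nra.
have hc : c = x0 + d0 *: v0 - r *: v0.
  by rewrite -hm /m /xb opprB addrC subrK.
have d0r : d0 <= r.
  have Q := @quad_lim R (2 * (d0 - r)) ((r - d0) ^+ 2 - r ^+ 2) d0 d0pos.
  have /Q H : forall t, 0 < t -> t < d0 ->
      t ^+ 2 + (2 * (d0 - r)) * t + ((r - d0) ^+ 2 - r ^+ 2) < 0.
    move=> t t0 td; set y := x0 - t *: v0.
    have Oy : Omega y.
      apply: inner; have -> : y - x0 = (- t) *: v0 by rewrite /y addrC addKr scaleNr.
      by rewrite enormZ v01 mulr1 normrN ger0_norm ?ltW.
    have := Sub y Oy.
    have -> : y - c = 0 *: v0 + (r - d0 - t) *: v0.
      by apply/matrixP => i j; rewrite /y hc !mxE; ring.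
    rewrite dot_lin2 vv => H; nra.
  nra.
split; last first.
  move=> y; rewrite /eball /= => H.
  suff HH : Num.sqrt ((1 + 4 * R0) * d0) <= rho / 4 by lra.
  have r4 : 0 <= rho / 4 by rewrite divr_ge0 // ltW.
  rewrite -[rho / 4]ger0_norm // -sqrtr_sqr.
  rewrite ler_sqrt ?sqr_ge0 //.
  have h1 : 0 < 1 + 4 * R0 by rewrite addr_gt0 ?mulr_gt0.
  have := ler_wpM2l (ltW h1) Hmin.
  have -> : (1 + 4 * R0) * (rho ^+ 2 / (16 * (1 + 4 * R0))) = (rho / 4) ^+ 2.
    by field; rewrite gt_eqF.
  done.
move=> x [Ox Hx]; rewrite /eball /=.
set w := x - x0 in Hx *; set a := enorm w in Hx *.
have aa : edot w w = a ^+ 2 by rewrite enorm_sq.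
have a0 : 0 <= a by exact: enorm_ge0.
set q := edot w v0.
have Hq : - q <= theta * a by rewrite -dotNr.
have h1 : 0 < 1 + 4 * R0 by rewrite addr_gt0 ?mulr_gt0.
have th0 : 0 <= theta by exact: sqrtr_ge0.
have th2 : theta ^+ 2 = d0 / (6 * R0) by rewrite sqr_sqrtr // ltW // divr_gt0 // mulr_gt0.
have thpos : 0 < theta.
  rewrite lt_neqAle th0 andbT; apply/eqP => t0.
  by move: th2; rewrite -t0 expr0n /= => /esym/eqP; rewrite mulf_eq0 invr_eq0 mulf_eq0 !gt_eqF.
have rth : r * theta ^+ 2 <= d0 / 6.
  have -> : d0 / 6 = r * theta ^+ 2 + d0 * (R0 - r) / (6 * R0) by rewrite th2; field; rewrite gt_eqF.
  by rewrite lerDl divr_ge0 ?mulr_ge0 ?subr_ge0 // ltW.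
have Sx := Sub x Ox.
have Ec : x - c = 1 *: w + (r - d0) *: v0.
  by apply/matrixP => i j; rewrite /w hc !mxE; ring.
rewrite Ec dot_lin2 aa vv -/q in Sx.
have -> : x - xb = 1 *: w + (- d0) *: v0 by apply/matrixP => i j; rewrite /w /xb !mxE; ring.
rewrite /enorm ltr_sqrt ?mulr_gt0 // dot_lin2 aa vv -/q.
have i1 : a ^+ 2 < 2 * r * d0 + 2 * r * (theta * a).
  have : 0 <= (r - d0) * (q + theta * a) by apply: mulr_ge0; lra.
  have : 0 <= d0 * (theta * a) by rewrite !mulr_ge0.
  nra.
have i2 : theta * a <= d0.
  rewrite leNgt; apply/negP => tlt.
  have : theta ^+ 2 * a ^+ 2 < theta ^+ 2 * (2 * r * d0 + 2 * r * (theta * a)).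
    by rewrite ltr_pM2l // exprn_gt0.
  have -> : theta ^+ 2 * a ^+ 2 = (theta * a) ^+ 2 by rewrite exprMn.
  have -> : theta ^+ 2 * (2 * r * d0 + 2 * r * (theta * a)) =
     2 * d0 * (r * theta ^+ 2) + 2 * (theta * a) * (r * theta ^+ 2) by ring.
  set t := theta * a in tlt *.
  have : 2 * d0 * (r * theta ^+ 2) <= 2 * d0 * (d0 / 6) by rewrite ler_pM2l ?mulr_gt0.
  have : 2 * t * (r * theta ^+ 2) <= 2 * t * (d0 / 6).
    rewrite ler_pM2l ?mulr_gt0 //; rewrite lt_neqAle a0 andbT; apply/eqP => a00; move: tlt; rewrite /t -a00 mulr0; lra.
  nra.
have : r * (theta * a) <= r * d0 by rewrite ler_pM2l.
have : r * q >= - (r * (theta * a)) by rewrite -mulrN ler_pM2l //; lra.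
have : 4 * r * d0 <= 4 * R0 * d0 by rewrite ler_pM2r // ler_pM2l.
nra.
Qed.
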